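(* Let $H$ be a connected graph, $G_n$ a graph, $p_n\in(0,1)$ with $\mathrm{Var}[T(H,G_n)]>0$, and $M>0$. Then (a) $\mathbb P(T(H,G_n)\ne T_M^\circ(H,G_n))\le\frac{2^{|V(H)|}-1}{M(1-p_n)}$; (b) $\frac{1}{\sqrt{\mathrm{Var}[T(H,G_n)]}}\mathbb E|T(H,G_n)-T_M^\circ(H,G_n)|\le\frac{2^{|V(H)|}-1}{\sqrt M(1-p_n)}$.
   Context: $G_n$ is a simple labeled graph on $V(G_n)=\{1,\dots,|V(G_n)|\}$ with adjacency $(a_{ij})$; $H=(V(H),E(H))$ with $|Aut(H)|$ automorphisms. $V(G_n)_k$ is the set of $k$-tuples of distinct vertices, $\bar{\mathbf s}$ the set of entries. $M_H(\mathbf s)=\prod_{(i,j)\in E(H)}a_{s_is_j}$, $t_H(A)=\frac1{|Aut(H)|}\sum_{\mathbf s:\bar{\mathbf s}\supseteq A}M_H(\mathbf s)$. $\{X_v\}$ i.i.d. Bernoulli$(p_n)$, $X_{\mathbf s}=\prod_uX_{s_u}$, $T(H,G_n)=\frac1{|Aut(H)|}\sum_{\mathbf s}M_H(\mathbf s)X_{\mathbf s}$. For $M>0$, $\mathcal C_M(A)$ is the condition $t_H(A)^2>Mp_n^{2|A|-2|V(H)|}\mathrm{Var}[T(H,G_n)]$, and $\mathbf 1\{\mathcal C_M(\mathbf s)\}=1$ iff $\mathcal C_M(A)$ fails for all nonempty $A\subseteq\bar{\mathbf s}$. $T_M^\circ(H,G_n)=\frac1{|Aut(H)|}\sum_{\mathbf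 s\in V(G_n)_{|V(H)|}}M_H(\mathbf s)X_{\mathbf s}\mathbf 1\{\mathcal C_M(\mathbf s)\}$. *)

(* Defs.v *)
(* Discrete probability over the finite sample space
   {ffun 'I_N -> bool} of vertex indicators. *)
From HB Require Import structures.
From mathcomp Require Import all_boot all_order all_algebra all_fingroup.
From mathcomp Require Import reals.
Set Implicit Arguments. Unset Strict Implicit. Unset Printing Implicit Defensive.
Import Order.TTheory GRing.Theory Num.Theory.
Local Open Scope ring_scope.

Section Defs.
Context {R : realType}.

Definition simple_graph n (e : rel 'I_n) : Prop :=
  (forall i j, e i j = e j i) /\ (forall i, e i i = false).

Definition connected_graph n (e : rel 'I_n) : Prop :=
  (0 < n)%N /\ (forall i j, fingraph.connect e i j).

Variables (k N : nat) (h : rel 'I_k) (e : rel 'I_N) (p M : R).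

Definition autH : nat :=
  #|[set s : {perm 'I_k} | [forall i, forall j, h (s i) (s j) == h i j]]|.

Definition adj (i j : 'I_N) : R := (e i j)%:R.

Definition MH (s : {ffun 'I_k -> 'I_N}) : R :=
  \prod_(i : 'I_k) \prod_(j : 'I_k | (i < j)%N && h i j) adj (s i) (s j).

Definition entries (s : {ffun 'I_k -> 'I_N}) : {set 'I_N} := [set s i | i : 'I_k].

Definition tH (A : {set 'I_N}) : R :=
  (autH%:R)^-1 * \sum_(s : {ffun 'I_k -> 'I_N} | injectiveb s && (A \subset entries s)) MH s.

Definition prob (w : {ffun 'I_N -> bool}) : R :=
  \prod_(v : 'I_N) (if w v then p else 1 - p).

Definition Ex (f : {ffun 'I_N -> bool} -> R) : R := \sum_w prob w * f w.

Definition Pr (E : pred {ffun 'I_N -> bool}) : R := \sum_(w | E w) prob w.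

Definition Xs (w : {ffun 'I_N -> bool}) (s : {ffun 'I_k -> 'I_N}) : R :=
  \prod_(u : 'I_k) (w (s u))%:R.

Definition T (w : {ffun 'I_N -> bool}) : R :=
  (autH%:R)^-1 * \sum_(s : {ffun 'I_k -> 'I_N} | injectiveb s) MH s * Xs w s.

Definition VarT : R := Ex (fun w => (T w - Ex T) ^+ 2).

Definition CM (A : {set 'I_N}) : bool :=
  M * p ^ ((2 * #|A|)%:Z - (2 * k)%:Z) * VarT < tH A ^+ 2.

Definition goodM (s : {ffun 'I_k -> 'I_N}) : bool :=
  [forall A : {set 'I_N}, ((A != set0) && (A \subset entries s)) ==> ~~ CM A].

Definition Tcirc (w : {ffun 'I_N -> bool}) : R :=
  (autH%:R)^-1 * \sum_(s : {ffun 'I_k -> 'I_N} | injectiveb s)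
                   MH s * Xs w s * (goodM s)%:R.

End Defs.

(* Main.v *)
Require Import Defs.
From HB Require Import structures.
From mathcomp Require Import all_boot all_order all_algebra all_fingroup.
From mathcomp Require Import reals.
From mathcomp Require Import ring zify.
Import Order.TTheory GRing.Theory Num.Theory.
Local Open Scope ring_scope.
Set Implicit Arguments. Unset Strict Implicit. Unset Printing Implicit Defensive.

Section Helpers.
Variables (R : realType) (k N : nat) (h : rel 'I_k) (e : rel 'I_N) (p : R).

Definition ind (w : {ffun 'I_N -> bool}) (A : {set 'I_N}) : R :=
  (A \subset [set v | w v])%:R.

Lemma Xs_ind w (s : {ffun 'I_k -> 'I_N}) : Xs w s = ind w (entries s).
Proof.
rewrite /Xs /ind.
have -> : (entries s \subset [set v | w v]) = [forall u, w (s u)].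
  apply/subsetP/forallP => [H u|H v /imsetP [u _ ->]].
    have su : s u \in entries s by apply/imsetP; exists u.
    by have := H _ su; rewrite inE.
  by rewrite inE.
case: forallP => [H|H].
  by rewrite big1 // => u _; rewrite H.
have [u Hu] : exists u, ~~ w (s u).
  by apply/existsP; rewrite -negb_forall; apply/negP => /forallP.
by rewrite (bigD1 u) //= (negbTE Hu) mul0r.
Qed.

Lemma Ex_ind A : Ex p (fun w => ind w A) = p ^+ #|A|.
Proof.
rewrite /Ex /prob.
transitivity (\sum_(w : {ffun 'I_N -> bool}) \prod_(v : 'I_N)
   ((if w v then p else 1 - p) * (if v \in A then (w v)%:R else 1))).
  apply: eq_bigr => w _; rewrite big_split /=; congr (_ * _).
  rewrite /ind; case: (boolP (A \subset _)) => [/subsetP H|H].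
    by rewrite big1 // => v _; case: ifP => // /H; rewrite inE => ->.
  have [v Hv] : exists v, (v \in A) && ~~ w v.
    apply/existsP; move: H; apply: contraNT; rewrite negb_exists => /forallP H.
    by apply/subsetP => v vA; move: (H v); rewrite vA inE /= negbK.
  case/andP: Hv => vA wv.
  by rewrite (bigD1 v) //= vA (negbTE wv) mul0r.
rewrite -(bigA_distr_bigA (fun v (b : bool) => (if b then p else 1 - p) *
   (if v \in A then b%:R else 1))) /=.
rewrite -prodr_const [RHS]big_mkcond /=; apply: eq_bigr => v _.
rewrite big_bool /=; case: (v \in A); rewrite ?mulr1 ?mulr0 ?addr0 //.
by rewrite addrC subrK.
Qed.

Lemma Ex_sum1 : Ex p (fun _ : {ffun 'I_N -> bool} => 1) = 1.
Proof.
have := Ex_ind set0; rewrite cards0 expr0 => {2}<-.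
by rewrite /Ex; apply: eq_bigr => w _; rewrite /ind sub0set.
Qed.


Lemma ExD (f g : {ffun 'I_N -> bool} -> R) :
  Ex p (fun w => f w + g w) = Ex p f + Ex p g.
Proof. by rewrite /Ex -big_split; apply: eq_bigr => w _; rewrite mulrDr. Qed.

Lemma ExZ c (f : {ffun 'I_N -> bool} -> R) :
  Ex p (fun w => c * f w) = c * Ex p f.
Proof. by rewrite /Ex mulr_sumr; apply: eq_bigr => w _; rewrite mulrCA. Qed.

Lemma Ex_sum (I : finType) (P : pred I) (F : I -> {ffun 'I_N -> bool} -> R) :
  Ex p (fun w => \sum_(i | P i) F i w) = \sum_(i | P i) Ex p (F i).
Proof.
rewrite /Ex (exchange_big) /=; apply: eq_bigr => w _; by rewrite mulr_sumr.
Qed.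

Lemma Var_expand (f : {ffun 'I_N -> bool} -> R) :
  Ex p (fun w => (f w - Ex p f) ^+ 2) = Ex p (fun w => f w ^+ 2) - (Ex p f) ^+ 2.
Proof.
set c := Ex p f.
transitivity (Ex p (fun w => f w ^+ 2 + (- (2 * c)) * f w + c ^+ 2 * 1)).
  by apply: eq_bigr => w _; congr (_ * _); ring.
rewrite !ExD !ExZ.
rewrite Ex_sum1.
rewrite -/c; ring.
Qed.

Lemma ind_mul w A B : ind w A * ind w B = ind w (A :|: B).
Proof. by rewrite /ind subUset -natrM mulnb. Qed.

Lemma MH_ge0 (s : {ffun 'I_k -> 'I_N}) : (0 : R) <= MH h e s.
Proof.
by apply: prodr_ge0 => i _; apply: prodr_ge0 => j _; rewrite /adj ler0n.
Qed.

Lemma autH_gt0 : 0 < (autH h)%:R :> R.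
Proof.
rewrite ltr0n /autH; apply/card_gt0P; exists 1%g.
by rewrite inE; apply/forallP => i; apply/forallP => j; rewrite !perm1.
Qed.

Lemma card_entries (s : {ffun 'I_k -> 'I_N}) : injectiveb s -> #|entries s| = k.
Proof. by move/injectiveP => Hs; rewrite /entries card_imset // card_ord. Qed.

Lemma T_ind w : T h e w = (autH h)%:R^-1 *
  \sum_(s : {ffun 'I_k -> 'I_N} | injectiveb s) MH h e s * ind w (entries s).
Proof. by rewrite /T; congr (_ * _); apply: eq_bigr => s _; rewrite Xs_ind. Qed.

Lemma ET : Ex p (T h e) = (autH h)%:R^-1 *
  \sum_(s : {ffun 'I_k -> 'I_N} | injectiveb s) MH h e s * p ^+ #|entries s|.
Proof.
transitivity (Ex p (fun w => (autH h)%:R^-1 *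
  \sum_(s : {ffun 'I_k -> 'I_N} | injectiveb s) MH h e s * ind w (entries s))).
  by apply: eq_bigr => w _; rewrite T_ind.
rewrite ExZ Ex_sum; congr (_ * _); apply: eq_bigr => s _.
by rewrite ExZ Ex_ind.
Qed.

Lemma ET2 : Ex p (fun w => T h e w ^+ 2) = (autH h)%:R^-1 * (autH h)%:R^-1 *
  \sum_(s : {ffun 'I_k -> 'I_N} | injectiveb s)
  \sum_(s' : {ffun 'I_k -> 'I_N} | injectiveb s')
     MH h e s * MH h e s' * p ^+ #|entries s :|: entries s'|.
Proof.
transitivity (Ex p (fun w => (autH h)%:R^-1 * (autH h)%:R^-1 *
  \sum_(s : {ffun 'I_k -> 'I_N} | injectiveb s)
  \sum_(s' : {ffun 'I_k -> 'I_N} | injectiveb s')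
     (MH h e s * MH h e s' * ind w (entries s :|: entries s')))).
  apply: eq_bigr => w _; congr (_ * _).
  rewrite T_ind expr2 mulrACA; congr (_ * _); rewrite big_distrlr /=.
  apply: eq_bigr => s _; apply: eq_bigr => s' _.
  by rewrite -ind_mul; ring.
rewrite ExZ Ex_sum; congr (_ * _); apply: eq_bigr => s _.
rewrite Ex_sum; apply: eq_bigr => s' _.
by rewrite ExZ Ex_ind.
Qed.

Lemma VarF : VarT h e p = (autH h)%:R^-1 * (autH h)%:R^-1 *
  \sum_(s : {ffun 'I_k -> 'I_N} | injectiveb s)
  \sum_(s' : {ffun 'I_k -> 'I_N} | injectiveb s')
     MH h e s * MH h e s' *
       (p ^+ #|entries s :|: entries s'| - p ^+ #|entries s| * p ^+ #|entries s'|).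
Proof.
rewrite /VarT Var_expand ET2 ET expr2 mulrACA big_distrlr /= -mulrBr.
congr (_ * _); rewrite -sumrB; apply: eq_bigr => s _.
rewrite -sumrB; apply: eq_bigr => s' _; ring.
Qed.

Lemma count_sub (I : {set 'I_N}) :
  \sum_(A : {set 'I_N} | A != set0) (A \subset I)%:R = (2 ^ #|I| - 1)%:R :> R.
Proof.
have H : \sum_(A : {set 'I_N}) (A \subset I)%:R = (2 ^ #|I|)%:R :> R.
  rewrite -card_powerset -sumr_const [RHS]big_mkcond /=; apply: eq_bigr => A _.
  by rewrite powersetE; case: (A \subset I).
move: H; rewrite (bigD1 set0) //= sub0set => H.
rewrite natrB ?expn_gt0 // -H /=.
by rewrite addrC addrK.
Qed.

Lemma pair_bound (hp0 : 0 < p) (hp1 : p < 1) (S S' : {set 'I_N}) :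
  #|S| = k -> #|S'| = k ->
  \sum_(A : {set 'I_N} | A != set0) (A \subset S :&: S')%:R * p ^+ (2 * k - #|A|)
  <= (2 ^ k - 1)%:R / (1 - p) *
     (p ^+ #|S :|: S'| - p ^+ #|S| * p ^+ #|S'|).
Proof.
move=> HS HS'.
have hUI := cardsUI S S'; rewrite HS HS' in hUI.
set u := #|S :|: S'| in hUI *; set j := #|S :&: S'| in hUI *.
have jk : (j <= k)%N by rewrite -HS subset_leq_card // subsetIl.
have step1 : \sum_(A : {set 'I_N} | A != set0) (A \subset S :&: S')%:R * p ^+ (2 * k - #|A|)
   <= (2 ^ j - 1)%:R * p ^+ u.
  rewrite -count_sub mulr_suml; apply: ler_sum => A _.
  case: (boolP (A \subset _)) => HA; last by rewrite !mul0r.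
  rewrite !mul1r; apply: ler_wiXn2l; rewrite ?(ltW hp0) ?(ltW hp1) //.
  have := subset_leq_card HA; rewrite -/j => Aj; lia.
apply: (le_trans step1).
rewrite HS HS' -exprD -hUI exprD.
have q0 : 0 < 1 - p by rewrite subr_gt0.
have pu0 : 0 <= p ^+ u by rewrite exprn_ge0 // ltW.
case: j jk hUI step1 => [|j] jk hUI step1.
  rewrite expn0 subnn mul0r expr0 mulr1 subrr mulr0 //.
have h1 : (2 ^ j.+1 - 1)%:R <= (2 ^ k - 1)%:R :> R.
  by rewrite ler_nat leq_sub2r // leq_pexp2l.
have h2 : 1 - p <= 1 - p ^+ j.+1.
  by rewrite lerB // ler_iXnr // ?ltW.
apply: (le_trans (ler_wpM2r pu0 h1)).
have -> : (2 ^ k - 1)%:R / (1 - p) * (p ^+ u - p ^+ u * p ^+ j.+1)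
   = ((2 ^ k - 1)%:R * p ^+ u) * ((1 - p ^+ j.+1) / (1 - p)) by ring.
rewrite -[X in X <= _]mulr1; apply: ler_wpM2l.
  by rewrite mulr_ge0 // ler0n.
by rewrite ler_pdivlMr // mul1r.
Qed.

Lemma tH_sq (A : {set 'I_N}) : tH h e A ^+ 2 = ((autH h)%:R : R)^-1 * (autH h)%:R^-1 *
  \sum_(s : {ffun 'I_k -> 'I_N} | injectiveb s)
  \sum_(s' : {ffun 'I_k -> 'I_N} | injectiveb s')
     (A \subset entries s :&: entries s')%:R * (MH h e s * MH h e s').
Proof.
rewrite /tH expr2 mulrACA; congr (_ * _).
rewrite !(big_mkcondr _ _ (fun s : {ffun 'I_k -> 'I_N} => injectiveb s)) big_distrlr /=; apply: eq_bigr => s _.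
apply: eq_bigr => s' _; rewrite subsetI.
by case: (A \subset entries s); case: (A \subset entries s'); rewrite /= ?mul0r ?mulr0 ?mul1r.
Qed.

Lemma SumW_eq : \sum_(A : {set 'I_N} | A != set0) tH h e A ^+ 2 * p ^+ (2 * k - #|A|)
  = (autH h)%:R^-1 * (autH h)%:R^-1 *
  \sum_(s : {ffun 'I_k -> 'I_N} | injectiveb s)
  \sum_(s' : {ffun 'I_k -> 'I_N} | injectiveb s')
     MH h e s * MH h e s' * \sum_(A : {set 'I_N} | A != set0)
       (A \subset entries s :&: entries s')%:R * p ^+ (2 * k - #|A|).
Proof.
under eq_bigr => A _ do rewrite tH_sq -!mulrA mulr_suml.
rewrite -!mulr_sumr mulrA; congr (_ * _).
rewrite exchange_big /=; apply: eq_bigr => s _.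
under eq_bigr => A _ do rewrite mulr_suml.
rewrite exchange_big /=; apply: eq_bigr => s' _.
rewrite mulr_sumr; apply: eq_bigr => A _; ring.
Qed.

Lemma V_bound (hp0 : 0 < p) (hp1 : p < 1) :
  \sum_(A : {set 'I_N} | A != set0) tH h e A ^+ 2 * p ^+ (2 * k - #|A|)
  <= (2 ^ k - 1)%:R / (1 - p) * VarT h e p.
Proof.
rewrite SumW_eq VarF mulrCA; apply: ler_wpM2l.
  by rewrite mulr_ge0 // invr_ge0 ltW // autH_gt0.
rewrite mulr_sumr; apply: ler_sum => s Hs.
rewrite mulr_sumr; apply: ler_sum => s' Hs'.
rewrite mulrCA; apply: ler_wpM2l; first by rewrite mulr_ge0 // MH_ge0.
by apply: pair_bound => //; apply: card_entries.
Qed.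

Variable M : R.

Lemma tH_ge0 A : (0 : R) <= tH h e A.
Proof.
rewrite /tH mulr_ge0 ?invr_ge0 ?ler0n //.
by apply: sumr_ge0 => s _; apply: MH_ge0.
Qed.

Lemma CM_ineq (hp0 : 0 < p) A : CM h e p M A ->
  M * VarT h e p * p ^+ (2 * #|A|) < tH h e A ^+ 2 * p ^+ (2 * k).
Proof.
rewrite /CM => H.
have pk : 0 < p ^+ (2 * k) by rewrite exprn_gt0.
rewrite -(ltr_pM2r pk) in H.
suff E : M * p ^ ((2 * #|A|)%:Z - (2 * k)%:Z) * VarT h e p * p ^+ (2 * k)
   = M * VarT h e p * p ^+ (2 * #|A|) by rewrite -E.
have E1 : p ^ ((2 * #|A|)%:Z - (2 * k)%:Z) * p ^+ (2 * k) = p ^+ (2 * #|A|).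
  by rewrite !exprnP -expfzDr ?lt0r_neq0 // subrK.
rewrite -E1; ring.
Qed.

Lemma CM_card (hp0 : 0 < p) (hV : 0 < VarT h e p) (hM : 0 < M) A :
  CM h e p M A -> (#|A| <= k)%N.
Proof.
rewrite leqNgt; apply: contraTN => Hk.
have t0 : tH h e A = 0 :> R.
  rewrite /tH big1 ?mulr0 // => s /andP [_ HA].
  have := subset_leq_card HA.
  have : (#|entries s| <= k)%N by rewrite /entries -[k in (_ <= k)%N]card_ord leq_imset_card.
  move=> ? ?; exfalso; lia.
rewrite /CM t0 -leNgt expr2 mul0r.
by apply: ltW; rewrite mulr_gt0 // mulr_gt0 // exprz_gt0.
Qed.



Lemma CM_a (hp0 : 0 < p) (hV : 0 < VarT h e p) (hM : 0 < M) A : CM h e p M A ->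
  p ^+ #|A| <= tH h e A ^+ 2 * p ^+ (2 * k - #|A|) / (M * VarT h e p).
Proof.
move=> H; have Hk := CM_card hp0 hV hM H; have H2 := CM_ineq hp0 H.
have pa : 0 < p ^+ #|A| by rewrite exprn_gt0.
rewrite ler_pdivlMr ?mulr_gt0 // -(ler_pM2r pa).
have E1 : tH h e A ^+ 2 * p ^+ (2 * k - #|A|) * p ^+ #|A| = tH h e A ^+ 2 * p ^+ (2 * k).
  by rewrite -mulrA -exprD subnK //; lia.
have E2 : p ^+ #|A| * (M * VarT h e p) * p ^+ #|A| = M * VarT h e p * p ^+ (2 * #|A|).
  by rewrite mul2n -addnn exprD; ring.
by rewrite E1 E2 ltW.
Qed.

Lemma CM_b (hp0 : 0 < p) (hV : 0 < VarT h e p) (hM : 0 < M) A : CM h e p M A ->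
  tH h e A * p ^+ k <= tH h e A ^+ 2 * p ^+ (2 * k - #|A|) / (Num.sqrt M * Num.sqrt (VarT h e p)).
Proof.
move=> H; have Hk := CM_card hp0 hV hM H; have H2 := CM_ineq hp0 H.
have pa : 0 < p ^+ #|A| by rewrite exprn_gt0.
have sM : 0 < Num.sqrt M by rewrite sqrtr_gt0.
have sV : 0 < Num.sqrt (VarT h e p) by rewrite sqrtr_gt0.
set X := Num.sqrt M * Num.sqrt (VarT h e p) * p ^+ #|A|.
set Y := tH h e A * p ^+ k.
have X0 : 0 <= X by rewrite !mulr_ge0 // ltW.
have Y0 : 0 <= Y by rewrite mulr_ge0 ?tH_ge0 // exprn_ge0 // ltW.
have XY : X < Y.
  rewrite -(ltr_pXn2r (n := 2)) ?nnegrE //.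
  have -> : X ^+ 2 = M * VarT h e p * p ^+ (2 * #|A|).
    by rewrite /X !exprMn !sqr_sqrtr ?ltW // -exprM mulnC.
  have -> : Y ^+ 2 = tH h e A ^+ 2 * p ^+ (2 * k).
    by rewrite /Y exprMn -exprM mulnC.
  exact: H2.
rewrite ler_pdivlMr ?mulr_gt0 // -(ler_pM2r pa).
have E1 : tH h e A ^+ 2 * p ^+ (2 * k - #|A|) * p ^+ #|A| = Y * Y.
  rewrite -mulrA -exprD subnK; last by lia.
  by rewrite /Y mul2n -addnn exprD; ring.
have E2 : Y * (Num.sqrt M * Num.sqrt (VarT h e p)) * p ^+ #|A| = Y * X.
  by rewrite /X; ring.
by rewrite E1 E2 ler_wpM2l // ltW.
Qed.

Lemma T_minus w : T h e w - Tcirc h e p M w = (autH h)%:R^-1 *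
  \sum_(s : {ffun 'I_k -> 'I_N} | injectiveb s)
     MH h e s * Xs w s * (~~ goodM h e p M s)%:R.
Proof.
rewrite /T /Tcirc -mulrBr -sumrB; congr (_ * _); apply: eq_bigr => s _.
by case: (goodM h e p M s); rewrite /= ?mulr1 ?mulr0 ?subrr ?subr0.
Qed.

Lemma bad_sub (s : {ffun 'I_k -> 'I_N}) : ~~ goodM h e p M s ->
  exists A : {set 'I_N}, ((A != set0) && CM h e p M A) /\ A \subset entries s.
Proof.
rewrite /goodM negb_forall => /existsP [A].
rewrite negb_imply negbK => /andP [/andP [A0 AS] C].
by exists A; rewrite A0 C.
Qed.

Lemma sum_CM_le (F : {set 'I_N} -> R) : (forall A, 0 <= F A) ->
  \sum_(A : {set 'I_N} | (A != set0) && CM h e p M A) F A <=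
  \sum_(A : {set 'I_N} | A != set0) F A.
Proof.
move=> F0; rewrite (big_mkcondr _ _ (fun A : {set 'I_N} => A != set0)) /=.
by apply: ler_sum => A _; case: ifP.
Qed.

Lemma bad_le (s : {ffun 'I_k -> 'I_N}) : (~~ goodM h e p M s)%:R <=
  \sum_(A : {set 'I_N} | (A != set0) && CM h e p M A) (A \subset entries s)%:R :> R.
Proof.
case: (boolP (goodM h e p M s)) => g /=.
  by rewrite sumr_ge0 // => A _; rewrite ler0n.
have [A [HA AS]] := bad_sub g.
rewrite (bigD1 A) //= AS lerDl.
by rewrite sumr_ge0 // => B _; rewrite ler0n.
Qed.

Lemma prob_ge0 (hp0 : 0 < p) (hp1 : p < 1) (w : {ffun 'I_N -> bool}) : 0 <= prob p w.
Proof.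
apply: prodr_ge0 => v _; case: (w v); first by rewrite ltW.
by rewrite subr_ge0 ltW.
Qed.

Lemma Ex_le (hp0 : 0 < p) (hp1 : p < 1) (f g : {ffun 'I_N -> bool} -> R) :
  (forall w, f w <= g w) -> Ex p f <= Ex p g.
Proof.
by move=> H; apply: ler_sum => w _; apply: ler_wpM2l; [apply: prob_ge0|apply: H].
Qed.

Lemma pt_a w : (T h e w != Tcirc h e p M w)%:R <=
  \sum_(A : {set 'I_N} | (A != set0) && CM h e p M A) ind w A.
Proof.
have S0 : forall B : pred {set 'I_N}, 0 <= \sum_(A | B A) ind w A.
  by move=> B; rewrite sumr_ge0 // => A _; rewrite /ind ler0n.
case: (boolP [exists A : {set 'I_N}, ((A != set0) && CM h e p M A)
                 && (A \subset [set v | w v])]).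
  move=> /existsP [A /andP [HA HAw]].
  rewrite (bigD1 A) //= {1}/ind HAw.
  apply: (@le_trans _ _ 1); first by case: (_ != _).
  by rewrite lerDl S0.
move=> Hn.
suff -> : T h e w = Tcirc h e p M w by rewrite eqxx S0.
apply/eqP; rewrite -subr_eq0 T_minus big1 ?mulr0 // => s _.
case: (boolP (goodM h e p M s)) => g; first by rewrite mulr0.
have [A [HA AS]] := bad_sub g.
rewrite Xs_ind /ind; case: (boolP (entries s \subset _)) => Hs; last by rewrite mulr0 mul0r.
exfalso; move/negP: Hn; apply; apply/existsP; exists A.
by rewrite HA (subset_trans AS Hs).
Qed.

Lemma pt_b w : `|T h e w - Tcirc h e p M w| <=
  \sum_(A : {set 'I_N} | (A != set0) && CM h e p M A)
    (autH h)%:R^-1 * \sum_(s : {ffun 'I_k -> 'I_N} | injectiveb s)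
      (A \subset entries s)%:R * (MH h e s * ind w (entries s)).
Proof.
have a0 : (0 : R) <= (autH h)%:R^-1 by rewrite invr_ge0 ler0n.
rewrite T_minus ger0_norm; last first.
  rewrite mulr_ge0 // sumr_ge0 // => s _.
  by rewrite !mulr_ge0 ?ler0n ?MH_ge0 // Xs_ind /ind ler0n.
rewrite -mulr_sumr; apply: ler_wpM2l => //.
rewrite exchange_big /=; apply: ler_sum => s _.
rewrite -mulr_suml Xs_ind mulrC; apply: ler_wpM2r.
  by rewrite mulr_ge0 ?MH_ge0 // /ind ler0n.
exact: bad_le.
Qed.

Lemma Ex_b_rhs (A : {set 'I_N}) :
  Ex p (fun w => (autH h)%:R^-1 * \sum_(s : {ffun 'I_k -> 'I_N} | injectiveb s)
      (A \subset entries s)%:R * (MH h e s * ind w (entries s)))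
  = tH h e A * p ^+ k.
Proof.
rewrite ExZ Ex_sum /tH -mulrA mulr_suml; congr (_ * _).
rewrite (big_mkcondr _ _ (fun s : {ffun 'I_k -> 'I_N} => injectiveb s)) /=.
apply: eq_bigr => s Hs.
rewrite ExZ ExZ Ex_ind card_entries //.
by case: (A \subset entries s); rewrite ?mul1r ?mul0r.
Qed.
End Helpers.

Unset Implicit Arguments.
Theorem lemma5p2 (R : realType) (k N : nat) (h : rel 'I_k) (e : rel 'I_N) (p M : R) :
  simple_graph h -> connected_graph h -> simple_graph e ->
  0 < p < 1 -> 0 < VarT h e p -> 0 < M ->
  Pr p (fun w => T h e w != Tcirc h e p M w)
    <= (2 ^ k - 1)%:R / (M * (1 - p)) /\
  (Num.sqrt (VarT h e p))^-1 * Ex p (fun w => `|T h e w - Tcirc h e p M w|)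
    <= (2 ^ k - 1)%:R / (Num.sqrt M * (1 - p)).
Proof.
move=> _ _ _ /andP [hp0 hp1] hV hM.
set V := VarT h e p.
set W := fun A : {set 'I_N} => tH h e A ^+ 2 * p ^+ (2 * k - #|A|).
have W0 : forall A, 0 <= W A.
  by move=> A; rewrite /W mulr_ge0 ?sqr_ge0 // exprn_ge0 // ltW.
have HV := V_bound h e hp0 hp1.
have q0 : 0 < 1 - p by rewrite subr_gt0.
split.
- have step1 : Pr p (fun w => T h e w != Tcirc h e p M w) <=
      \sum_(A : {set 'I_N} | (A != set0) && CM h e p M A) p ^+ #|A|.
    rewrite /Pr big_mkcond /=.
    apply: (@le_trans _ _ (Ex p (fun w => \sum_(A : {set 'I_N} | (A != set0) && CM h e p M A) ind R w A))).
      apply: ler_sum => w _.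
      have := pt_a h e p M w; case: (T h e w != _) => /= H.
        by rewrite -[X in X <= _]mulr1 ler_wpM2l // prob_ge0.
      by rewrite mulr_ge0 ?prob_ge0 // sumr_ge0 // => A _; rewrite /ind ler0n.
    by rewrite Ex_sum; apply: ler_sum => A _; rewrite Ex_ind.
  apply: (le_trans step1).
  apply: (@le_trans _ _ (\sum_(A : {set 'I_N} | (A != set0) && CM h e p M A) W A / (M * V))).
    by apply: ler_sum => A /andP [_ HA]; apply: CM_a.
  apply: (le_trans (sum_CM_le h e p M (F := fun A => W A / (M * V)) _)).
    by move=> A; rewrite divr_ge0 // ltW // mulr_gt0.
  rewrite -mulr_suml.
  apply: (le_trans (ler_wpM2r _ HV)); first by rewrite invr_ge0 ltW // mulr_gt0.
  rewrite le_eqVlt; apply/orP; left; apply/eqP.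
  rewrite /V; field; rewrite ?lt0r_neq0 // ?andbT; apply/andP; split; rewrite lt0r_neq0 //.
- have sM : 0 < Num.sqrt M by rewrite sqrtr_gt0.
  have sV : 0 < Num.sqrt V by rewrite sqrtr_gt0.
  have step1 : Ex p (fun w => `|T h e w - Tcirc h e p M w|) <=
      \sum_(A : {set 'I_N} | (A != set0) && CM h e p M A) tH h e A * p ^+ k.
    apply: (le_trans (Ex_le hp0 hp1 (pt_b h e p M))).
    by rewrite Ex_sum; apply: ler_sum => A _; rewrite Ex_b_rhs.
  rewrite -ler_pdivlMl ?invr_gt0 // invrK.
  apply: (le_trans step1).
  apply: (@le_trans _ _ (\sum_(A : {set 'I_N} | (A != set0) && CM h e p M A)
       W A / (Num.sqrt M * Num.sqrt V))).
    by apply: ler_sum => A /andP [_ HA]; apply: CM_b.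
  apply: (le_trans (sum_CM_le h e p M (F := fun A => W A / (Num.sqrt M * Num.sqrt V)) _)).
    by move=> A; rewrite divr_ge0 // ltW // mulr_gt0.
  rewrite -mulr_suml.
  apply: (le_trans (ler_wpM2r _ HV)); first by rewrite invr_ge0 ltW // mulr_gt0.
  rewrite le_eqVlt; apply/orP; left; apply/eqP.
  have -> : VarT h e p = Num.sqrt V ^+ 2 by rewrite sqr_sqrtr // ltW.
  by field; rewrite ?lt0r_neq0.
Qed.
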